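(* Let $G$ be a simple graph on $n$ vertices with $cM_2(G)\ge cM_2(H)$ for every simple graph $H$ on $n$ vertices, and let $F$, $Y$ be as defined in the context. If $u,v\in Y$ and $uv\in E(G)$, then $uv$ is not an undirected edge of $F$ (equivalently, $d_G(u)\ne d_G(v)$).
   Context: All graphs are finite and simple; $d_G(u)$ is the degree of $u$ and $cM_2(G)=\sum_{uv\in E(G)}|d_G(u)^2-d_G(v)^2|$. The canonical mixed graph $F$ of $G$ has vertex set $V(G)$; for each edge $uv\in E(G)$: if $d_G(u)>d_G(v)$ then $F$ contains the arc $\overrightarrow{uv}$, and if $d_G(u)=d_G(v)$ then $F$ contains the undirected edge $uv$. $d^+_F(u)$ (resp. $d^-_F(u)$) is the number of arcs of $F$ with tail (resp. head) $u$. $Y=\{u\in V(G): d^+_F(u)< d^-_F(u)\}$. *)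

(* Defs.v *)
From mathcomp Require Import all_boot all_order.
Set Implicit Arguments. Unset Strict Implicit. Unset Printing Implicit Defensive.

Record sgraph (T : finType) := SGraph {
  adj : rel T;
  adj_sym : symmetric adj;
  adj_irr : irreflexive adj }.

Definition deg (T : finType) (G : sgraph T) (u : T) : nat := #|[set v | adj G u v]|.

Definition absdiff (a b : nat) : nat := (a - b) + (b - a).

(* cM_2(G) = sum over edges uv of |d(u)^2 - d(v)^2|; each unordered edge
   counted once: sum over ordered pairs halved is avoided by summing over
   pairs (u,v) with u < v in the enumeration order of 'I_n. *)
Definition cM2 (n : nat) (G : sgraph 'I_n) : nat :=
  \sum_(u : 'I_n) \sum_(v : 'I_n | (u < v) && adj G u v)
     absdiff (deg G u ^ 2) (deg G v ^ 2).

Definition arcF (T : finType) (G : sgraph T) (u v : T) : bool :=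
  adj G u v && (deg G v < deg G u).
Definition undirF (T : finType) (G : sgraph T) (u v : T) : bool :=
  adj G u v && (deg G u == deg G v).

Definition outdegF (T : finType) (G : sgraph T) (u : T) : nat := #|[set v | arcF G u v]|.
Definition indegF (T : finType) (G : sgraph T) (u : T) : nat := #|[set v | arcF G v u]|.

Definition Yset (T : finType) (G : sgraph T) : {set T} :=
  [set u | outdegF G u < indegF G u].

(* Main.v *)
Require Import Defs.
From mathcomp Require Import all_boot all_order.
From mathcomp Require Import zify.
Set Implicit Arguments. Unset Strict Implicit. Unset Printing Implicit Defensive.

Definition gw n (G : sgraph 'I_n) (x y : 'I_n) : nat :=
  if adj G x y then absdiff (deg G x ^ 2) (deg G y ^ 2) else 0.

Lemma arith d e : 0 < d ->
  absdiff (d.-1 ^ 2) (e ^ 2) + (2 * d - 1) * (e < d) =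
  absdiff (d ^ 2) (e ^ 2) + (2 * d - 1) * (d <= e).
Proof.
case: d => // d _ /=; rewrite /absdiff.
case: (ltnP e d.+1) => h /=.
  have : e ^ 2 <= d ^ 2 by rewrite leq_exp2r.
  rewrite !expnS !expn0 !muln1 => h2. nia.
have : d.+1 ^ 2 <= e ^ 2 by rewrite leq_exp2r.
rewrite !expnS !expn0 !muln1 => h2. nia.
Qed.


Lemma sum_bool n (b : 'I_n -> bool) : \sum_y (b y : nat) = #|[set y | b y]|.
Proof.
rewrite -sum1_card [RHS]big_mkcond /=; apply: eq_bigr => y _; rewrite inE; by case: (b y).
Qed.

Lemma row_gt n (G H : sgraph 'I_n) (u v : 'I_n)
  (hadj : forall x y, adj H x y = adj G x y && ~~ (((x == u) && (y == v)) || ((x == v) && (y == u))))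
  (huv : u != v) (a : adj G u v) (hd : deg G u = deg G v) (hu : u \in Yset G) :
  \sum_y gw G u y < \sum_y gw H u y.
Proof.
have adj_u y : adj H u y = adj G u y && (y != v).
  by rewrite hadj eqxx /= (negbTE huv) /= orbF.
have deg_other x : x != u -> x != v -> deg H x = deg G x.
  move=> hxu hxv; rewrite /deg; apply: eq_card => y.
  by rewrite !inE hadj (negbTE hxu) (negbTE hxv) /= andbT.
have deg_u : deg H u = (deg G u).-1.
  rewrite /deg (cardsD1 v [set y | adj G u y]) inE a /=.
  congr (#|pred_of_set _|); apply/setP => y; rewrite !inE adj_u andbC //.
set d := deg G u.
have d0 : 0 < d by rewrite /d /deg (cardsD1 v) inE a.
set c := 2 * d - 1.
have pw y : gw H u y + c * (adj G u y && (deg G y < d)) =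
            gw G u y + c * [&& adj G u y, y != v & d <= deg G y].
  rewrite /gw adj_u; case ay: (adj G u y) => /=; last by [].
  case: (eqVneq y v) => [-> | yv] /=.
    by rewrite -hd /absdiff subnn ltnn !muln0.
  have yu : y != u by apply/eqP => e; rewrite e (adj_irr G u) in ay.
  by rewrite deg_u (deg_other y) // arith.
have S : \sum_y gw H u y + c * #|[set y | adj G u y && (deg G y < d)]| =
         \sum_y gw G u y + c * #|[set y | [&& adj G u y, y != v & d <= deg G y]]|.
  rewrite -!sum_bool !big_distrr -!big_split /=.
  by apply: eq_bigr => y _; apply: pw.
have hY : outdegF G u < indegF G u by move: hu; rewrite inE.
have hB : #|[set y | adj G u y && (deg G y < d)]| = outdegF G u by [].
have hA : indegF G u <= #|[set y | [&& adj G u y, y != v & d <= deg G y]]|.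
  apply: subset_leq_card; apply/subsetP => y; rewrite !inE /arcF => /andP[ay lt].
  rewrite (adj_sym G u y) ay /= (ltnW lt) andbT.
  by apply/eqP => e; move: lt; rewrite e -hd /d ltnn.
have c0 : 0 < c by rewrite /c; lia.
have : c * outdegF G u < c * indegF G u by rewrite ltn_pmul2l.
move: S; rewrite hB. nia.
Qed.
Lemma gw_sym n (G : sgraph 'I_n) x y : gw G x y = gw G y x.
Proof. by rewrite /gw (adj_sym G x y); case: (adj G y x) => //; rewrite /absdiff addnC. Qed.

Lemma gw_xx n (G : sgraph 'I_n) x : gw G x x = 0.
Proof. by rewrite /gw (adj_irr G x). Qed.

Lemma cM2_double n (G : sgraph 'I_n) :
  \sum_x \sum_y gw G x y = 2 * cM2 G.
Proof.
have hsplit (x : 'I_n) : \sum_y gw G x y =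
   \sum_(y : 'I_n | x < y) gw G x y + \sum_(y : 'I_n | y < x) gw G x y.
  rewrite (bigID (fun y : 'I_n => x < y)) /=; congr (_ + _).
  rewrite (bigID (fun y : 'I_n => y < x)) /= [X in _ + X]big1 ?addn0.
    by apply: eq_bigl => y; case: ltngtP => //= /ltnW ->.
  move=> y /andP[h1 h2]; have -> : y = x.
    apply/val_inj/eqP; rewrite eqn_leq; move: h1 h2; rewrite -!leqNgt => -> ->; done.
  exact: gw_xx.
under eq_bigr => x _ do rewrite hsplit.
rewrite big_split /=.
have -> : \sum_(x : 'I_n) \sum_(y : 'I_n | y < x) gw G x y = \sum_(x : 'I_n) \sum_(y : 'I_n | x < y) gw G x y.
  under eq_bigr => x _ do rewrite big_mkcond /=.
  rewrite exchange_big /=; apply: eq_bigr => y _.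
  by rewrite [RHS]big_mkcond; apply: eq_bigr => x _; rewrite gw_sym.
rewrite addnn -mul2n /cM2; congr (2 * _); apply: eq_bigr => x _.
by rewrite big_mkcondr.
Qed.

Lemma decomp n (f : 'I_n -> 'I_n -> nat) (u v : 'I_n) :
  u != v -> (forall x y, f x y = f y x) -> f u u = 0 -> f v v = 0 -> f u v = 0 ->
  \sum_x \sum_y f x y = 2 * \sum_y f u y + 2 * \sum_y f v y +
    \sum_(x | (x != u) && (x != v)) \sum_(y | (y != u) && (y != v)) f x y.
Proof.
move=> huv fs fuu fvv fuv.
have hrow (g : 'I_n -> nat) : \sum_y g y = g u + g v + \sum_(y | (y != u) && (y != v)) g y.
  rewrite (bigD1 u) //= (bigD1 v) /=; last by rewrite eq_sym.
  by rewrite addnA; congr (_ + _); apply: eq_bigl => y; rewrite andbC.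
rewrite (hrow (fun x => \sum_y f x y)) /=.
have e0 : \sum_(x | (x != u) && (x != v)) \sum_y f x y =
   \sum_(x | (x != u) && (x != v)) (f x u + f x v + \sum_(y | (y != u) && (y != v)) f x y).
  by apply: eq_bigr => x _; apply: hrow.
rewrite e0.
rewrite !big_split /=.
have e1 : \sum_(x | (x != u) && (x != v)) f x u = \sum_y f u y.
  by rewrite [RHS]hrow fuu fuv; apply: eq_bigr => x _; rewrite fs.
have e2 : \sum_(x | (x != u) && (x != v)) f x v = \sum_y f v y.
  by rewrite [RHS]hrow fvv -fs fuv; apply: eq_bigr => x _; rewrite fs.
rewrite e1 e2.
have r1 := hrow (f u). have r2 := hrow (f v).
rewrite fuu fuv in r1. rewrite fvv -fs fuv in r2.
rewrite !mul2n -!addnn !addnA; congr (_ + _); rewrite -!addnA; congr (_ + _); rewrite addnC -!addnA; congr (_ + _); apply: addnC.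
Qed.

Definition rm_adj (T : finType) (G : sgraph T) (u v : T) : rel T :=
  fun x y => adj G x y && ~~ (((x == u) && (y == v)) || ((x == v) && (y == u))).

Lemma rm_sym (T : finType) (G : sgraph T) u v : symmetric (rm_adj G u v).
Proof.
move=> x y; rewrite /rm_adj (adj_sym G x y); congr (_ && ~~ _).
by rewrite orbC; congr (_ || _); apply: andbC.
Qed.

Lemma rm_irr (T : finType) (G : sgraph T) u v : irreflexive (rm_adj G u v).
Proof. by move=> x; rewrite /rm_adj (adj_irr G x). Qed.

Theorem claim2 (n : nat) (G : sgraph 'I_n)
  (Hmax : forall H : sgraph 'I_n, cM2 H <= cM2 G)
  (u v : 'I_n) (hu : u \in Yset G) (hv : v \in Yset G) (huv : adj G u v) :
  ~~ undirF G u v.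
Proof.
apply/negP => /andP[_ /eqP hd].
have nuv : u != v by apply/eqP => e; rewrite e (adj_irr G v) in huv.
pose H := SGraph (rm_sym G u v) (rm_irr G u v).
have hadj : forall x y, adj H x y = adj G x y && ~~ (((x == u) && (y == v)) || ((x == v) && (y == u))) by [].
have hadj' : forall x y, adj H x y = adj G x y && ~~ (((x == v) && (y == u)) || ((x == u) && (y == v))).
  by move=> x y; rewrite hadj orbC.
have r1 := row_gt hadj nuv huv hd hu.
have nvu : v != u by rewrite eq_sym.
have avu : adj G v u by rewrite (adj_sym G v u).
have r2 := row_gt hadj' nvu avu (esym hd) hv.
have deg_other x : x != u -> x != v -> deg H x = deg G x.
  move=> hxu hxv; rewrite /deg; apply: eq_card => y.
  by rewrite !inE hadj (negbTE hxu) (negbTE hxv) /= andbT.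
have dG := cM2_double G. have dH := cM2_double H.
have gG : gw G u v = 0 by rewrite /gw huv hd /absdiff subnn.
have gH : gw H u v = 0 by rewrite /gw hadj !eqxx /= andbF.
rewrite (decomp nuv (@gw_sym n G) (gw_xx G u) (gw_xx G v) gG) in dG.
rewrite (decomp nuv (@gw_sym n H) (gw_xx H u) (gw_xx H v) gH) in dH.
have eT : \sum_(x | (x != u) && (x != v)) \sum_(y | (y != u) && (y != v)) gw H x y =
          \sum_(x | (x != u) && (x != v)) \sum_(y | (y != u) && (y != v)) gw G x y.
  apply: eq_bigr => x /andP[xu xv]; apply: eq_bigr => y /andP[yu yv].
  by rewrite /gw hadj (negbTE xu) (negbTE xv) /= andbT !deg_other.
have := Hmax H. lia.
Qed.
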